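(* Let $X$ be a noetherian topological space and $A,B\subseteq X$ two closed subspaces neither of which is contained in the other. Then: (1) $c(A\cup B)\le\dim(A\cap B)$; (2) if $A\cap B$ is irreducible then $c(A\cup B)\le c(A)$; (3) if $B$ is irreducible then $c(A\cup B)\ge\min\{c(A),\dim(A\cap B)\}$; (4) if $B$ and $A\cap B$ are irreducible then $c(A\cup B)=\min\{c(A),\dim(A\cap B)\}$.
   Context: For a noetherian topological space $T$, the connectedness dimension is $c(T)=\min\{\dim Z: Z\subseteq T\text{ closed and } T\setminus Z\text{ disconnected}\}$, where $\dim$ is Krull dimension of the topological space. *)

(* Defs.v *)
From HB Require Import structures.
From mathcomp Require Import all_boot all_order all_algebra.
From mathcomp Require Import all_classical all_reals all_analysis.
From mathcomp Require Import Rstruct Rstruct_topology.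
Set Implicit Arguments. Unset Strict Implicit. Unset Printing Implicit Defensive.
Import Order.TTheory GRing.Theory Num.Theory.
Local Open Scope classical_set_scope.
Local Open Scope ring_scope.

Section Defs.
Variable X : topologicalType.

Definition noetherian_space : Prop :=
  forall F : nat -> set X, (forall n, closed (F n)) ->
    (forall n, F n.+1 `<=` F n) ->
    exists N, forall n, (N <= n)%N -> F n = F N.

Definition rel_closed (S Z : set X) : Prop :=
  exists2 C, closed C & Z = S `&` C.

Definition irreducible (S : set X) : Prop :=
  S !=set0 /\
  forall C1 C2 : set X, closed C1 -> closed C2 ->
    S `<=` C1 `|` C2 -> S `<=` C1 \/ S `<=` C2.

(* Convention (Brodmann--Sharp):
   the empty space is disconnected.  'connected' is the library notion
   of connectedness of a subset (w.r.t. the subspace topology). *)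
Definition disconnected (S : set X) : Prop :=
  S = set0 \/ ~ connected S.

Definition irr_chain (S : set X) (n : nat) : Prop :=
  exists Z : nat -> set X,
    (forall i, (i <= n)%N -> rel_closed S (Z i) /\ irreducible (Z i)) /\
    (forall i, (i < n)%N -> Z i `<` Z i.+1).

Definition kdim (S : set X) : \bar Rdefinitions.R :=
  ereal_sup ([set (-1)%:E] `|` [set (n%:R)%:E | n in irr_chain S]).

Definition conn_dim (T : set X) : \bar Rdefinitions.R :=
  ereal_inf [set kdim Z | Z in [set Z | rel_closed T Z /\ disconnected (T `\` Z)]].

End Defs.

(* Main.v *)
Require Import Defs.
From HB Require Import structures.
From mathcomp Require Import all_boot all_order all_algebra.
From mathcomp Require Import all_classical all_reals all_analysis.
From mathcomp Require Import Rstruct Rstruct_topology.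
Import Order.TTheory GRing.Theory Num.Theory.
Local Open Scope classical_set_scope.
Local Open Scope ereal_scope.
Set Implicit Arguments.

Section Helpers.
Variable X : topologicalType.
Implicit Types S T A B C D Z : set X.

Lemma disc S D1 D2 : closed D1 -> closed D2 ->
  (forall x, S x -> D1 x \/ D2 x) -> (forall x, S x -> D1 x -> D2 x -> False) ->
  (exists x, S x /\ D1 x) -> (exists x, S x /\ D2 x) -> ~ connected S.
Proof.
move=> c1 c2 cov dis [a [Sa D1a]] [b [Sb D2b]] cS.
have := cS (S `&` ~` D2).
have E : S `&` ~` D2 = S `&` D1.
  apply/seteqP; split=> x [Sx H]; split=> //.
    by case: (cov x Sx).
  by move=> D2x; exact: (dis x).
move=> /(_ _ _ _) H.
have : S `&` ~` D2 = S.
  apply: H.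
  - exists a; split=> // D2a; exact: (dis a).
  - by exists (~` D2) => //; rewrite openC.
  - by exists D1 => //.
move=> E2.
have : (S `&` ~` D2) b by rewrite E2.
by move=> [_ []].
Qed.

Lemma undisc S : ~ connected S -> exists D1 D2, [/\ closed D1, closed D2,
  (forall x, S x -> D1 x \/ D2 x), (forall x, S x -> D1 x -> D2 x -> False)
  & (exists x, S x /\ D1 x) /\ (exists x, S x /\ D2 x)].
Proof.
move=> nc.
have [P [P0 [Op oO PO] [C cC PC] nPS]] : exists P, [/\ P !=set0,
   (exists2 C, open C & P = S `&` C), (exists2 C, closed C & P = S `&` C) & P <> S].
  apply: contrapT => H; apply: nc => P P0 Po Pc; apply: contrapT => nPS.
  by apply: H; exists P.
exists C, (~` Op); split => //.
- exact: open_closedC.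
- move=> x Sx; case: (pselect (Op x)) => Ox; [left|by right].
  have : P x by rewrite PO.
  by rewrite PC => -[].
- move=> x Sx Cx nOx.
  have : P x by rewrite PC.
  by rewrite PO => -[].
split.
  case: P0 => p Pp; exists p.
  by move: (Pp); rewrite {1}PC => -[].
- apply: contrapT => H; apply: nPS; apply/seteqP; split.
    by rewrite PO => x [].
  move=> x Sx; rewrite PO; split=> //.
  by apply: contrapT => nOx; apply: H; exists x.
Qed.

Lemma kdim_mono S T : closed S -> S `<=` T -> kdim S <= kdim T.
Proof.
move=> cS ST; apply: ereal_sup_le.
move=> y [->|[n [Z [HZ HZ2]] <-]]; [by left|right].
exists n => //; exists Z; split => // i ilen.
case: (HZ i ilen) => rc irr.
case: rc => C cC E.
split => //; exists (S `&` C); first exact: closedI.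
rewrite E.
apply/seteqP; split=> x /=.
  by move=> [a b]; split; [exact: ST|split].
by move=> [_ [a b]]; split.
Qed.

Lemma conn_le T Z : rel_closed T Z -> disconnected (T `\` Z) ->
  conn_dim T <= kdim Z.
Proof. by move=> h1 h2; apply: ereal_inf_lbound; exists Z. Qed.

Lemma relI S T : S `<=` T -> S = T `&` S.
Proof.
move=> ST; apply/seteqP; split=> x /=; first by move=> a; split=> //; exact: ST.
by case.
Qed.

Lemma exnsub A B : ~ (A `<=` B) -> exists x, A x /\ ~ B x.
Proof.
move=> H; apply: contrapT => H2; apply: H => x Ax; apply: contrapT => nB.
by apply: H2; exists x.
Qed.

Lemma part1 A B : closed A -> closed B -> ~ (A `<=` B) -> ~ (B `<=` A) ->
  conn_dim (A `|` B) <= kdim (A `&` B).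
Proof.
move=> cA cB nAB nBA; apply: conn_le.
  exists (A `&` B); first exact: closedI.
  by apply: relI => x [p q]; left.
right; apply: (disc cA cB).
- by move=> x [].
- by move=> x [_ H] a b; apply: H.
- have [x [a b]] := exnsub nAB; exists x; split => //; split; [by left|by case].
- have [x [a b]] := exnsub nBA; exists x; split => //; split; [by right|by case].
Qed.

Lemma part2core A B C D1 D2 : closed A -> closed B -> closed C ->
  closed D1 -> closed D2 ->
  (forall x, (A `\` (A `&` C)) x -> D1 x \/ D2 x) ->
  (forall x, (A `\` (A `&` C)) x -> D1 x -> D2 x -> False) ->
  (exists x, (A `\` (A `&` C)) x /\ D1 x) ->
  (exists x, (A `\` (A `&` C)) x /\ D2 x) ->
  (forall x, (A `\` (A `&` C)) x -> D2 x -> B x -> False) ->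
  conn_dim (A `|` B) <= kdim (A `&` C).
Proof.
move=> cA cB cC c1 c2 cov dis [a [Sa D1a]] [b [Sb D2b]] av.
apply: conn_le.
  exists (A `&` C); first exact: closedI.
  by apply: relI => x [p q]; left.
right; apply: (disc (D1 := (A `&` D1) `|` B) (D2 := A `&` D2)).
- by apply: closedU => //; apply: closedI.
- exact: closedI.
- move=> x [[Ax|Bx] nZ]; [|by left; right].
  by case: (cov x (conj Ax nZ)) => h; [left; left|right].
- move=> x [_ nZ] [[Ax D1x]|Bx] [Ax' D2x].
    exact: (dis x (conj Ax nZ)).
  exact: (av x (conj Ax' nZ)).
- exists a; case: Sa => Aa nZ; split; [split=> //; by left|by left].
- by exists b; case: Sb => Ab nZ; split; [split=> //; by left|].
Qed.

Lemma part2 A B : closed A -> closed B -> ~ (A `<=` B) -> ~ (B `<=` A) ->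
  irreducible (A `&` B) -> conn_dim (A `|` B) <= conn_dim A.
Proof.
move=> cA cB nAB nBA [_ irr].
apply: le_ereal_inf_tmp => _ [Z [[C cC ->] dZ] <-].
case: dZ => [E|nc].
  apply: le_trans (part1 cA cB nAB nBA) _.
  apply: kdim_mono; first exact: closedI.
  move=> x [Ax Bx]; split=> //; apply: contrapT => nC.
  have : (A `\` (A `&` C)) x by split=> // -[].
  by rewrite E.
have [D1 [D2 [c1 c2 cov dis [e1 e2]]]] := undisc nc.
case: (pselect (forall x, A x -> B x -> C x)) => H.
  apply: (part2core cA cB cC c1 c2 cov dis e1 e2).
  by move=> x [Ax nZ] _ Bx; apply: nZ; split=> //; apply: H.
have [] : (A `&` B) `<=` C \/ (A `&` B) `<=` D1 `|` D2.
  apply: irr => //; first exact: closedU.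
  move=> x [Ax Bx]; case: (pselect (C x)) => Cx; [by left|right].
  by apply: cov; split=> // -[].
  move=> H'; exfalso; apply: H => x Ax Bx; exact: H'.
move=> H'.
have [] : (A `&` B) `<=` D1 \/ (A `&` B) `<=` D2.
  by apply: irr.
  move=> HD1; apply: (part2core cA cB cC c1 c2 cov dis e1 e2).
  move=> x Sx D2x Bx; apply: (dis x Sx) => //; apply: HD1; by case: Sx.
move=> HD2.
apply: (part2core (D1 := D2) (D2 := D1) cA cB cC c2 c1).
- by move=> x Sx; case: (cov x Sx); [right|left].
- by move=> x Sx p q; exact: (dis x Sx q p).
- exact: e2.
- exact: e1.
- move=> x Sx D1x Bx; apply: (dis x Sx) => //; apply: HD2; by case: Sx.
Qed.

Lemma part3core A B C D1 D2 : closed A -> closed B -> closed C ->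
  closed D1 -> closed D2 ->
  (forall x, ((A `|` B) `\` ((A `|` B) `&` C)) x -> D1 x \/ D2 x) ->
  (forall x, ((A `|` B) `\` ((A `|` B) `&` C)) x -> D1 x -> D2 x -> False) ->
  (exists x, ((A `|` B) `\` ((A `|` B) `&` C)) x /\ D2 x) ->
  B `<=` D1 ->
  Order.min (conn_dim A) (kdim (A `&` B)) <= kdim ((A `|` B) `&` C).
Proof.
move=> cA cB cC c1 c2 cov dis [b [Sb D2b]] BD1.
case: (pselect (exists x, A x /\ ~ C x /\ D1 x)) => [[a [Aa [nCa D1a]]]|H].
  rewrite ge_min; apply/orP; left.
  apply: (@le_trans _ _ (kdim (A `&` C))).
    apply: conn_le; first by exists C.
    right; apply: (disc c1 c2).
    - by move=> x [Ax nZ]; apply: cov; split; [left|move=> [_ ?]; apply: nZ].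
    - by move=> x [Ax nZ]; apply: dis; split; [left|move=> [_ ?]; apply: nZ].
    - by exists a; split=> //; split=> //; case.
    - exists b; split=> //.
      case: Sb => [[Ab|Bb] nZ].
        by split=> // -[_ Cb]; apply: nZ; split=> //; left.
      exfalso; exact: (dis b (conj (or_intror Bb) nZ) (BD1 _ Bb)).
  apply: kdim_mono; first exact: closedI.
  by move=> x [Ax Cx]; split=> //; left.
rewrite ge_min; apply/orP; right.
apply: kdim_mono; first exact: closedI.
move=> x [Ax Bx]; split; [by left|].
apply: contrapT => nC; apply: H; exists x; split=> //; split=> //.
exact: BD1.
Qed.

Lemma part3 A B : closed A -> closed B ->
  irreducible B -> Order.min (conn_dim A) (kdim (A `&` B)) <= conn_dim (A `|` B).
Proof.
move=> cA cB [_ irr].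
apply: le_ereal_inf_tmp => _ [Z [[C cC ->] dZ] <-].
case: (pselect (B `<=` C)) => BC.
  rewrite ge_min; apply/orP; right.
  apply: kdim_mono; first exact: closedI.
  by move=> x [Ax Bx]; split; [right|apply: BC].
have [b [Bb nCb]] := exnsub BC.
case: dZ => [E|nc].
  exfalso; have : ((A `|` B) `\` ((A `|` B) `&` C)) b.
    by split; [right|move=> [_ ?]; apply: nCb].
  by rewrite E.
have [D1 [D2 [c1 c2 cov dis [e1 e2]]]] := undisc nc.
have [] : B `<=` C \/ B `<=` D1 `|` D2.
  apply: irr => //; first exact: closedU.
  move=> x Bx; case: (pselect (C x)) => Cx; [by left|right].
  by apply: cov; split; [right|move=> [_ ?]; apply: Cx].
  by move=> H; exfalso; apply: BC.
move=> H; have [] : B `<=` D1 \/ B `<=` D2 by apply: irr.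
  by move=> HD1; apply: (part3core cA cB cC c1 c2 cov dis e2 HD1).
move=> HD2; apply: (part3core (D1 := D2) (D2 := D1) cA cB cC c2 c1) => //.
- by move=> x Sx; case: (cov x Sx); [right|left].
- by move=> x Sx p q; exact: (dis x Sx q p).
Qed.

End Helpers.

Theorem mainTheorem10 (X : topologicalType) (A B : set X) :
  noetherian_space X -> closed A -> closed B ->
  ~ (A `<=` B) -> ~ (B `<=` A) ->
  [/\ conn_dim (A `|` B) <= kdim (A `&` B),
      irreducible (A `&` B) -> conn_dim (A `|` B) <= conn_dim A,
      irreducible B ->
        Order.min (conn_dim A) (kdim (A `&` B)) <= conn_dim (A `|` B)
    & irreducible B -> irreducible (A `&` B) ->
        conn_dim (A `|` B) = Order.min (conn_dim A) (kdim (A `&` B))].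
Proof.
move=> _ cA cB nAB nBA; split.
- exact: part1.
- exact: part2.
- exact: part3.
- move=> iB iAB; apply/eqP; rewrite eq_le; apply/andP; split.
    by rewrite le_min (part1 cA cB nAB nBA) (part2 cA cB nAB nBA iAB).
  exact: part3.
Qed.
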